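(* Let $\mathcal G=(\mathcal V,\mathcal E,w)$ be a finite, undirected, connected graph with $n$ vertices and positive edge weights, and let $L$ be its Laplacian matrix. Let $w^*>0$ be a real number that is the weight of at least one $(m,k)$-star of $\mathcal G$. Let $\mathcal S_{w^*}$ be the set of all $(m,k)$-stars of $\mathcal G$ (as $m,k$ range over the positive integers with $m+k\le n$) whose weight is defined and equals $w^*$, and let $\deg(\mathcal S_{w^*})=\sum_{S_{m,k}\in\mathcal S_{w^*}}(m-1)$. Then $w^*$ is an eigenvalue of $L$ and its algebraic multiplicity as an eigenvalue of $L$ is at least $\deg(\mathcal S_{w^*})$.
   Context: Weighted adjacency matrix: $A_{ij}=w(i,j)$ if $\{i,j\}\in\mathcal E$ and $A_{ij}=0$ otherwise (no loops). The strength of a vertex $i$ is $s(i)=\sum_j A_{ij}$. The Laplacian is $L=D-A$ with $D=\mathrm{diag}(s(1),\dots,s(n))$. An $(m,k)$-star of $\mathcal G$, denoted $S_{m,k}$, is a pair $(\mathcal V_1,\mathcal V_2)$ of disjoint vertex sets with $|\mathcal V_1|=m\ge 2$, $|\mathcal V_2|=k$, such that every vertex of $\mathcal V_1$ is adjacent to every vertex of $\mathcal V_2$ and to no vertex outside $\mathcal V_2$ (so $\mathcal V_1$ is independent); the sets are uniquely determined, i.e. $\mathcal V_1$ is the set of all vertices of $\mathcal G$ whose neighbourhood is exactly $\mathcal V_2$ (so distinct $(m,k)$-stars have disjoint sets $\mathcal V_1$). Its degree is $m-1$. Its weight is defined only when $w(i,j)=w(i',j)$ for all $i,i'\in\mathcal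 V_1$ and all $j\in\mathcal V_2$, and then equals $\sum_{j\in\mathcal V_2}w(i,j)$ for any $i\in\mathcal V_1$. *)

(* Defs.v *)
From HB Require Import structures.
From mathcomp Require Import all_boot all_order all_algebra.
Set Implicit Arguments. Unset Strict Implicit. Unset Printing Implicit Defensive.
Import Order.TTheory GRing.Theory Num.Theory.
Local Open Scope ring_scope.

(* A weighted graph on vertex set 'I_n is given by its weighted adjacency
   matrix A : A i j = w(i,j) if {i,j} is an edge, 0 otherwise. *)
Section Graph.
Variables (R : realFieldType) (n : nat).
Implicit Types (A : 'M[R]_n).

Definition adj A : rel 'I_n := fun i j => A i j != 0.

Definition nbhd A (i : 'I_n) : {set 'I_n} := [set j | A i j != 0].

Definition strength A (i : 'I_n) : R := \sum_j A i j.

Definition laplacian A : 'M[R]_n :=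
  \matrix_(i, j) ((if i == j then strength A i else 0) - A i j).

(* V1 of the star with centre set V2: all vertices whose neighbourhood is
   exactly V2 (it is uniquely determined by V2). *)
Definition starV1 A (V2 : {set 'I_n}) : {set 'I_n} := [set i | nbhd A i == V2].

(* V2 is the centre set of an (m,k)-star with m = #|starV1 A V2| >= 2,
   k = #|V2| >= 1 (m + k <= n holds automatically since A has no loops). *)
Definition is_star A (V2 : {set 'I_n}) : bool := (0 < #|V2|)%N && (1 < #|starV1 A V2|)%N.

Definition star_weight_defined A (V2 : {set 'I_n}) : bool :=
  [forall i in starV1 A V2, forall i' in starV1 A V2,
     forall j in V2, A i j == A i' j].

(* the weight: sum_{j in V2} w(i,j) for (any, here a chosen) i in V1 *)
Definition star_weight A (V2 : {set 'I_n}) : R :=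
  if [pick i in starV1 A V2] is Some i then \sum_(j in V2) A i j else 0.

Definition stars_of_weight A (w : R) : {set {set 'I_n}} :=
  [set V2 | is_star A V2 && star_weight_defined A V2 && (star_weight A V2 == w)].

Definition deg_stars A (w : R) : nat :=
  \sum_(V2 in stars_of_weight A w) (#|starV1 A V2| - 1).

End Graph.

(* Main.v *)
Require Import Defs.
From HB Require Import structures.
From mathcomp Require Import all_boot all_order all_algebra.
From mathcomp Require Import ring.
Import Order.TTheory GRing.Theory Num.Theory.
Local Open Scope ring_scope.

Lemma key (F : fieldType) n (L P : 'M[F]_n) (S : {set 'I_n}) (w : F) :
  P \in unitmx -> (forall i, i \in S -> row i P *m L = w *: row i P) ->
  (#|S| <= mup w (char_poly L))%N.
Proof.
move=> uP Hrow.
pose PX := map_mx polyC P.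
pose D : 'rV[{poly F}]_n := \row_i (if i \in S then 'X - w%:P else 1).
pose N := \matrix_(i, j) (if i \in S then PX i j else (PX *m char_poly_mx L) i j).
have E : PX *m char_poly_mx L = diag_mx D *m N.
  rewrite mul_diag_mx; apply/matrixP => i j; rewrite !mxE.
  case: ifP => iS; last by rewrite mul1r.
  have := congr1 (fun M : 'M_(1, n) => M 0 j) (Hrow i iS); rewrite !mxE => Hij.
  have Hij' : \sum_k P i k * L k j = w * P i j.
    by rewrite -Hij; apply: eq_bigr => k _; rewrite mxE.
  rewrite /PX /char_poly_mx.
  rewrite (eq_bigr (fun k => (P i k)%:P * ('X *+ (k == j)) - (P i k * L k j)%:P)); last first.
    by move=> k _; rewrite !mxE mulrBr polyCM.
  rewrite sumrB -rmorph_sum Hij' (bigD1 j) //= big1 ?addr0; last first.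
    by move=> k /negPf ->; rewrite mulr0n mulr0.
  by rewrite eqxx mulr1n polyCM mulrBl mulrC mul_polyC.
have Ed := congr1 determinant E.
rewrite det_mulmx det_mulmx det_diag det_map_mx /= in Ed.
have HD : \prod_i D 0 i = ('X - w%:P) ^+ #|S|.
  rewrite -prodr_const.
  rewrite (bigID (mem S)) /= [X in _ * X]big1 ?mulr1 //.
    by apply: eq_bigr => i iS; rewrite mxE iS.
  by move=> i /negPf iS; rewrite mxE iS.
rewrite HD -/(char_poly L) mul_polyC in Ed.
have dP : \det P != 0 by rewrite -unitfE -unitmxE.
rewrite mup_geq ?monic_neq0 ?char_poly_monic // -(dvdpZr _ _ dP) Ed.
exact: dvdp_mulr.
Qed.

Theorem theorem1 (R : realFieldType) (n : nat) (A : 'M[R]_n) (wstar : R) :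
  A^T = A ->
  (forall i, A i i = 0) ->
  (forall i j, 0 <= A i j) ->
  (forall i j, connect (adj A) i j) ->
  0 < wstar ->
  stars_of_weight A wstar != set0 ->
  eigenvalue (laplacian A) wstar /\
  (deg_stars A wstar <= mup wstar (char_poly (laplacian A)))%N.
Proof.
move=> _ _ _ _ _ Hne.
pose repf i := [pick j in starV1 A (nbhd A i)].
pose S := [set i | (nbhd A i \in stars_of_weight A wstar) && (repf i != Some i)].
have inV1 : forall i, i \in starV1 A (nbhd A i) by move=> i; rewrite inE.
have F1 : forall i r, repf i = Some r -> nbhd A r = nbhd A i.
  move=> i r; rewrite /repf; case: pickP => // r' + [<-]; by rewrite inE => /eqP.
have F0 : forall i, exists r, repf i = Some r.
  move=> i; rewrite /repf; case: pickP => [r _|H]; first by exists r.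
  by have := H i; rewrite inV1.
have F2 : forall i r, repf i = Some r -> r \notin S.
  move=> i r Hr; rewrite inE negb_and negbK.
  have -> : repf r = repf i by rewrite /repf (F1 _ _ Hr).
  by rewrite Hr eqxx orbT.
have Hrows : forall i r, i \in S -> repf i = Some r -> forall k, A i k = A r k.
  move=> i r iS Hr k; move: iS; rewrite inE => /andP [] + _.
  rewrite inE => /andP [] /andP [] _ /forallP Hdef _.
  have rV1 : r \in starV1 A (nbhd A i) by rewrite inE (F1 _ _ Hr).
  case: (boolP (k \in nbhd A i)) => kV.
    move: (Hdef i); rewrite inV1 /= => /forallP /(_ r); rewrite rV1 /=.
    by move=> /forallP /(_ k); rewrite kV => /eqP.
  have kV' := kV; rewrite -(F1 _ _ Hr) in kV'.
  by move: kV kV'; rewrite !inE !negbK => /eqP -> /eqP ->.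
have Hstr : forall i r, i \in S -> repf i = Some r -> strength A r = wstar.
  move=> i r iS Hr; move: iS; rewrite inE => /andP [] + _.
  rewrite inE => /andP [] _ /eqP <-.
  rewrite /star_weight -/(repf i) Hr /strength (bigID (mem (nbhd A i))) /=.
  rewrite [X in _ + X]big1 ?addr0 // => k.
  by rewrite -(F1 _ _ Hr) inE negbK => H; apply/eqP.
pose N : 'M[R]_n := \matrix_(i, k) ((i \in S) && (repf i == Some k))%:R.
pose P : 'M[R]_n := 1%:M - N.
have NN : N *m N = 0.
  apply/matrixP => i k; rewrite !mxE big1 // => l _; rewrite !mxE.
  case: (boolP (i \in S)) => iS /=; last by rewrite mul0r.
  case: (boolP (repf i == Some l)) => /= H; last by rewrite mul0r.
  by rewrite (negPf (F2 _ _ (eqP H))) mulr0.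
have uP : P \in unitmx.
  have [] // := @mulmx1_unit _ _ P (1%:M + N).
  by rewrite /P mulmxBl !mulmxDr !mul1mx mulmx1 NN addr0 addrK.
have HD := @key R n (laplacian A) P S wstar uP.
have Hdeg : deg_stars A wstar = #|S|.
  rewrite /deg_stars -sum1_card (partition_big (nbhd A) (mem (stars_of_weight A wstar))) /=; last first.
    by move=> i; rewrite inE => /andP [].
  apply: eq_bigr => V2 HV2; rewrite sum1dep_card.
  have H1 : (1 < #|starV1 A V2|)%N.
    by move: HV2; rewrite inE /is_star => /andP [] /andP [] /andP [].
  have [r rV1 Hr] : exists2 r, r \in starV1 A V2 & [pick j in starV1 A V2] = Some r.
    case: pickP => [r ? |H0]; first by exists r.
    by move: H1; rewrite (eq_card0 H0).
  rewrite (cardD1 r) rV1 add1n subn1 /=; apply: eq_card => x; rewrite !inE.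
  case: (eqVneq (nbhd A x) V2) => [Ex|]; last by rewrite !andbF.
  rewrite andbT /repf Ex; move: HV2; rewrite inE => -> /=; rewrite Hr andbT eq_sym.
  by congr negb; apply/eqP/eqP => [->|[]].
have main : (deg_stars A wstar <= mup wstar (char_poly (laplacian A)))%N.
  rewrite Hdeg; apply: HD => i iS.
  have [r Hr] := F0 i.
  have ir : i != r.
    by move: iS; rewrite inE Hr => /andP [] _; rewrite eq_sym; apply: contra => /eqP ->.
  have -> : row i P = 'e_i - 'e_r.
    apply/rowP => k; rewrite !mxE iS Hr /=.
    have -> : (Some r == Some k) = (r == k) by apply/eqP/eqP => [[]|->].
    by rewrite [k == i]eq_sym [k == r]eq_sym.
  rewrite mulmxBl -!rowE; apply/rowP => k; rewrite !mxE /=.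
  have si : strength A i = wstar.
    by rewrite -(Hstr _ _ iS Hr) /strength; apply: eq_bigr => k' _; exact: Hrows.
  rewrite si [k == i]eq_sym [k == r]eq_sym.
  rewrite (Hrows _ _ iS Hr k) (Hstr _ _ iS Hr).
  by case: (i == k); case: (r == k) => /=; ring.
split => //.
have [V2 HV2] : exists V2, V2 \in stars_of_weight A wstar.
  by apply/set0Pn.
have H1 : (1 < #|starV1 A V2|)%N.
  by move: HV2; rewrite inE /is_star => /andP [] /andP [] /andP [].
have dpos : (0 < deg_stars A wstar)%N.
  rewrite /deg_stars (bigD1 V2) //=; apply: leq_trans (leq_addr _ _).
  by rewrite subn_gt0.
rewrite eigenvalue_root_char -dvdp_XsubCl XsubC_dvd ?monic_neq0 ?char_poly_monic //.
exact: leq_trans dpos main.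
Qed.
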